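(* Let $T$ be an $n$-simplex, $\ell\in\{1,\dots,n-1\}$, and let non-negative integers $r_{\ell-1},r_\ell$ satisfy $r_{\ell-1}\ge 2r_\ell$. Then the sets $$D(f,r_\ell)\setminus\Big[\bigcup_{e\in\Delta_{\ell-1}(f)}D(e,r_{\ell-1})\Big],\qquad f\in\Delta_\ell(T),$$ are pairwise disjoint.
   Context: $\mathbb N$ includes $0$; $\mathbb T^n_k=\{\alpha\in\mathbb N^{n+1}:\sum_i\alpha_i=k\}$ for a fixed integer $k\ge0$. $\Delta_\ell(T)$ is the set of $\ell$-dimensional faces of $T$; a face $f$ is identified with its vertex index set $f\subseteq\{0,\dots,n\}$, $f^*=\{0,\dots,n\}\setminus f$, and $\Delta_{\ell-1}(f)$ is the set of $(\ell-1)$-dimensional faces of $f$. $D(f,r)=\{\alpha\in\mathbb T^n_k:\sum_{i\in f^*}\alpha_i\le r\}$. *)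

(* Defs.v *)
From mathcomp Require Import all_boot.
Set Implicit Arguments. Unset Strict Implicit. Unset Printing Implicit Defensive.

(* Multi-indices alpha in N^{n+1}, indexed by vertices 'I_n.+1 = {0,..,n}. *)
Definition mindex (n : nat) := {ffun 'I_n.+1 -> nat}.

Definition inTnk (n k : nat) (a : mindex n) : bool := \sum_(i < n.+1) a i == k.

(* Delta_l(T): l-dimensional faces of the n-simplex, identified with
   their vertex index sets, i.e. subsets of {0..n} with l+1 elements. *)
Definition faces (n l : nat) : {set {set 'I_n.+1}} :=
  [set f : {set 'I_n.+1} | #|f| == l.+1].

Definition subfaces (n l : nat) (f : {set 'I_n.+1}) : {set {set 'I_n.+1}} :=
  [set e : {set 'I_n.+1} | (e \subset f) && (#|e| == l)].

Definition D (n k : nat) (f : {set 'I_n.+1}) (r : nat) : pred (mindex n) :=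
  [pred a | inTnk k a && (\sum_(i in ~: f) a i <= r)].

Definition Dsep (n k l : nat) (rlm1 rl : nat) (f : {set 'I_n.+1}) : pred (mindex n) :=
  [pred a | (a \in D k f rl) && ~~ [exists e in subfaces l f, a \in D k e rlm1]].

(* Main.v *)
Require Import Defs.
From mathcomp Require Import all_boot.

Theorem mainTheorem5 (n k l rlm1 rl : nat) :
  1 <= l <= n - 1 -> 2 * rl <= rlm1 ->
  forall f g : {set 'I_n.+1}, f \in faces n l -> g \in faces n l -> f != g ->
  forall a : mindex n, ~ ((a \in Dsep k l rlm1 rl f) /\ (a \in Dsep k l rlm1 rl g)).
Proof.
move=> _ hr f g; rewrite !inE => /eqP cf /eqP cg nfg a [].
rewrite !inE /= => /andP [/andP [hk hf] /negP hnf] /andP [/andP [_ hg] _].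
have [v vf vg] : exists2 v, v \in f & v \notin g.
  case: (boolP (f \subset g)) => sfg.
    have efg : f == g by rewrite eqEcard sfg cf cg leqnn.
    by rewrite efg in nfg.
  case/subsetPn: sfg => v ? ?; by exists v.
apply: hnf; apply/existsP; exists (f :\ v).
rewrite !inE subD1set /=.
have := cardsD1 v f; rewrite vf cf add1n => -[<-]; rewrite eqxx /=.
rewrite hk /=.
have vc : v \in ~: (f :\ v) by rewrite !inE eqxx.
rewrite (bigD1 v vc) /=.
have -> : \sum_(i in ~: (f :\ v) | i != v) a i = \sum_(i in ~: f) a i.
  apply: eq_bigl => i; rewrite !inE.
  by case: (i =P v) => [->|/eqP h]; rewrite ?eqxx ?vf ?h //= ?andbT.
have vg' : v \in ~: g by rewrite inE.
have hav : a v <= \sum_(i in ~: g) a i.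
  by rewrite (bigD1 v vg') /= leq_addr.
apply: leq_trans hr; rewrite mul2n -addnn.
apply: leq_add => //; exact: leq_trans hav hg.
Qed.
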